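(* Let $P\subseteq[0,k]^n$ be a lattice polytope, let $\sigma:[n]\to\pm[n]$ be a signed permutation, let $\alpha\ge 2k+1$ and $\mathbf{x}_\sigma=(\operatorname{sign}(\sigma(1))\alpha^{|\sigma(1)|},\dots,\operatorname{sign}(\sigma(n))\alpha^{|\sigma(n)|})$. Define a flag of faces $G_n\supseteq G_{n-1}\supseteq\dots\supseteq G_0$ by $G_n=P$ and, for $i=n,\dots,1$, $G_{i-1}$ is the face of $G_i$ on which $\mathbf{e}_{\sigma^{-1}(i)}^{\intercal}\mathbf{x}$ is maximized. Then $G_0$ is a single vertex, and it is the unique vertex of $P$ maximizing $\mathbf{x}_\sigma^{\intercal}\mathbf{x}$.
   Context: A signed permutation $\sigma:[n]\to\pm[n]$ is a map such that $i\mapsto|\sigma(i)|$ is a permutation of $[n]$. For $j\in[n]$, $\sigma^{-1}(j)$ denotes the signed index $\operatorname{sign}(\sigma(i))\,i$ where $|\sigma(i)|=j$, and $\mathbf{e}_{-i}:=-\mathbf{e}_i$, with $\mathbf{e}_i$ the standard basis vectors. A lattice polytope has integer vertices. *)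

(* Defs.v *)
From HB Require Import structures.
From mathcomp Require Import all_boot all_order all_algebra.
Set Implicit Arguments. Unset Strict Implicit. Unset Printing Implicit Defensive.
Import Order.TTheory GRing.Theory Num.Theory.
Local Open Scope ring_scope.

Section Defs.
Variables (R : realFieldType) (n : nat).

Definition dotv (c x : 'rV[R]_n) : R := \sum_(i < n) c 0 i * x 0 i.

Definition conv (V : seq 'rV[R]_n) : 'rV[R]_n -> Prop :=
  fun x => exists lam : 'I_(size V) -> R,
    [/\ forall j, 0 <= lam j, \sum_j lam j = 1 & x = \sum_j lam j *: V`_j].

Definition lattice_point (v : 'rV[R]_n) : Prop :=
  forall i, exists z : int, v 0 i = z%:~R.

Definition face_max (c : 'rV[R]_n) (S : 'rV[R]_n -> Prop) : 'rV[R]_n -> Prop :=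
  fun x => S x /\ forall y, S y -> dotv c y <= dotv c x.

Definition is_vertex (S : 'rV[R]_n -> Prop) (v : 'rV[R]_n) : Prop :=
  S v /\ forall x y (t : R), S x -> S y -> 0 < t < 1 ->
    v = t *: x + (1 - t) *: y -> x = y.

(* signed permutation sigma : [n] -> ±[n], with [n] indexed by 'I_n (0-based
   domain) and values in int (1-based, signed). *)
Definition signed_perm (sigma : 'I_n -> int) : Prop :=
  (forall i, (1 <= `|sigma i| <= n)%N) /\ injective (fun i => `|sigma i|%N).

(* e_{sigma^{-1}(j)} = sign(sigma i) e_i where |sigma i| = j *)
Definition e_sinv (sigma : 'I_n -> int) (j : nat) : 'rV[R]_n :=
  \row_i (if `|sigma i|%N == j then (Num.sg (sigma i))%:~R else 0).

Definition x_sigma (sigma : 'I_n -> int) (alpha : R) : 'rV[R]_n :=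
  \row_i ((Num.sg (sigma i))%:~R * alpha ^+ `|sigma i|%N).

(* flag_step P sigma t = G_{n-t}: G_n = P, G_{i-1} = face of G_i maximizing
   e_{sigma^{-1}(i)}^T x *)
Fixpoint flag_step (P : 'rV[R]_n -> Prop) (sigma : 'I_n -> int) (t : nat)
  : 'rV[R]_n -> Prop :=
  match t with
  | O => P
  | t'.+1 => face_max (e_sinv sigma (n - t')) (flag_step P sigma t')
  end.

Definition flagG P sigma (i : nat) := flag_step P sigma (n - i).

End Defs.

(* Main.v *)
Require Import Defs.
From HB Require Import structures.
From mathcomp Require Import all_boot all_order all_algebra.
From mathcomp Require Import zify ring lra.
Import Order.TTheory GRing.Theory Num.Theory.
Local Open Scope ring_scope.
Set Implicit Arguments. Unset Strict Implicit. Unset Printing Implicit Defensive.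

Section Conv.
Variables (R : realFieldType) (n : nat) (V : seq 'rV[R]_n).

Definition convP (Q : 'rV[R]_n -> Prop) (x : 'rV[R]_n) : Prop :=
  exists lam : 'I_(size V) -> R,
    [/\ forall j, 0 <= lam j, \sum_j lam j = 1, x = \sum_j lam j *: V`_j
      & forall j, lam j != 0 -> Q V`_j].

Lemma dotv_sum (c : 'rV[R]_n) (lam : 'I_(size V) -> R) :
  dotv c (\sum_j lam j *: V`_j) = \sum_j lam j * dotv c V`_j.
Proof.
rewrite /dotv.
under eq_bigr => i _ do rewrite summxE mulr_sumr.
rewrite exchange_big /=; apply: eq_bigr => j _.
rewrite mulr_sumr; apply: eq_bigr => i _; rewrite mxE mulrCA.
by [].
Qed.

Lemma dotv_comb (c x y : 'rV[R]_n) (t s : R) :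
  dotv c (t *: x + s *: y) = t * dotv c x + s * dotv c y.
Proof.
rewrite /dotv mulr_sumr mulr_sumr -big_split /=; apply: eq_bigr => i _.
rewrite !mxE; ring.
Qed.

Lemma convP_mem (Q : 'rV[R]_n -> Prop) v : v \in V -> Q v -> convP Q v.
Proof.
move=> vV Qv.
have hi : (index v V < size V)%N by rewrite index_mem.
pose j0 : 'I_(size V) := Ordinal hi.
exists (fun j => (j == j0)%:R); split.
- by move=> j; rewrite ler0n.
- rewrite (bigD1 j0) //= eqxx big1 ?addr0 //.
  by move=> j hj; rewrite (negbTE hj).
- rewrite (bigD1 j0) //= eqxx scale1r big1 ?addr0 ?nth_index //.
  by move=> j hj; rewrite (negbTE hj) scale0r.
- move=> j; case: (eqVneq j j0) => [-> _|]; first by rewrite /= nth_index.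
  by rewrite eqxx.
Qed.

Lemma conv_convP x : conv V x <-> convP (fun _ => True) x.
Proof.
split=> [[lam [h1 h2 h3]]|[lam [h1 h2 h3 _]]]; exists lam; by split.
Qed.

Lemma convP_single (Q : 'rV[R]_n -> Prop) v x :
  (forall u, u \in V -> Q u -> u = v) -> convP Q x -> x = v.
Proof.
move=> hQ [lam [h1 h2 -> h4]].
have -> : \sum_j lam j *: V`_j = \sum_j lam j *: v.
  apply: eq_bigr => j _; have [->|/h4 q] := eqVneq (lam j) 0.
    by rewrite !scale0r.
  by rewrite (hQ _ (mem_nth 0 (ltn_ord j)) q).
by rewrite -scaler_suml h2 scale1r.
Qed.

Lemma convP_weak (Q Q' : 'rV[R]_n -> Prop) x :
  (forall u, Q u -> Q' u) -> convP Q x -> convP Q' x.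
Proof. move=> h [lam [h1 h2 h3 h4]]; exists lam; split=> // j /h4; exact: h. Qed.

Lemma face_convP (Q : 'rV[R]_n -> Prop) (c v : 'rV[R]_n) :
  v \in V -> Q v -> (forall u, u \in V -> Q u -> dotv c u <= dotv c v) ->
  forall x, face_max c (convP Q) x <->
            convP (fun u => Q u /\ dotv c u = dotv c v) x.
Proof.
move=> vV Qv hmax x.
have bound : forall y, convP Q y -> dotv c y <= dotv c v.
  move=> y [lam [h1 h2 -> h4]]; rewrite dotv_sum.
  rewrite -[X in _ <= X]mul1r -h2 mulr_suml; apply: ler_sum => j _.
  have [->|/h4 q] := eqVneq (lam j) 0; first by rewrite !mul0r.
  by apply: ler_wpM2l => //; apply: hmax => //; apply: mem_nth.
split.
- move=> [[lam [h1 h2 hx h4]] hy].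
  have le1 := hy _ (convP_mem vV Qv).
  exists lam; split=> // j lj; split; first exact: h4.
  have hsum : \sum_j lam j * (dotv c v - dotv c V`_j) = 0.
    apply/eqP; rewrite eq_le; apply/andP; split.
      under eq_bigr => i _ do rewrite mulrBr.
      rewrite sumrB -mulr_suml h2 mul1r -dotv_sum -hx subr_le0 //.
    apply: sumr_ge0 => i _.
    have [->|/h4 q] := eqVneq (lam i) 0; first by rewrite mul0r.
    by apply: mulr_ge0 => //; rewrite subr_ge0; apply: hmax => //; apply: mem_nth.
  have hnn : forall i, xpredT i -> 0 <= lam i * (dotv c v - dotv c V`_i).
    move=> i _; have [->|/h4 q] := eqVneq (lam i) 0; first by rewrite mul0r.
    by apply: mulr_ge0 => //; rewrite subr_ge0; apply: hmax => //; apply: mem_nth.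
  have := @psumr_eq0P _ _ xpredT _ hnn hsum j isT.
  move=> /eqP; rewrite mulf_eq0 (negbTE lj) /= subr_eq0.
  by move=> /eqP ->.
- move=> hx; split.
    by apply: convP_weak hx => u [].
  move=> y /bound hy; apply: (le_trans hy).
  case: hx => lam [h1 h2 -> h4]; rewrite dotv_sum.
  rewrite -[X in X <= _]mul1r -h2 mulr_suml le_eqVlt; apply/orP; left.
  apply/eqP; apply: eq_bigr => j _.
  have [->|/h4 [_ ->]] := eqVneq (lam j) 0; first by rewrite !mul0r.
  by [].
Qed.

End Conv.

Section Main.
Variables (R : realFieldType) (n k : nat) (V : seq 'rV[R]_n)
  (sigma : 'I_n -> int) (alpha : R).
Hypothesis Hlat : forall v, v \in V -> lattice_point v.
Hypothesis Hbox : forall x, conv V x -> forall i, 0 <= x 0 i <= k%:R.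
Hypothesis Hsig : signed_perm sigma.
Hypothesis Halpha : (2 * k + 1)%:R <= alpha.

Local Notation a i := (`|sigma i|%N).
Local Notation s i := ((Num.sg (sigma i))%:~R : R).
Local Notation f x := (dotv (x_sigma sigma alpha) x).

Lemma a_inj : injective (fun i => a i).
Proof. by case: Hsig. Qed.

Lemma a_bound i : (1 <= a i <= n)%N.
Proof. by case: Hsig. Qed.

Lemma s_pm i : s i = 1 \/ s i = -1.
Proof.
have : sigma i != 0.
  apply/eqP=> h; have := a_bound i; rewrite h /=; done.
rewrite neq_lt => /orP[h|h].
  by right; rewrite ltr0_sg.
by left; rewrite gtr0_sg.
Qed.

Lemma k_alpha : k%:R <= alpha - 1.
Proof.
rewrite lerBrDr; apply: le_trans Halpha.
have -> : k%:R + 1 = (k + 1)%:R :> R by rewrite natrD.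
rewrite ler_nat; lia.
Qed.

Lemma alpha_ge1 : 1 <= alpha.
Proof. have := k_alpha; have : 0 <= k%:R :> R by []. lra. Qed.

Lemma boxV u : u \in V -> forall i, 0 <= u 0 i <= k%:R.
Proof.
move=> uV; apply: Hbox; apply/conv_convP; exact: convP_mem.
Qed.

Lemma count_le (A : nat) :
  \sum_i (if (a i < A)%N then alpha ^+ a i else 0) <= \sum_(e < A) alpha ^+ e.
Proof.
have a0 : 0 <= alpha by apply: le_trans alpha_ge1.
have -> : \sum_i (if (a i < A)%N then alpha ^+ a i else 0) =
          \sum_i \sum_(e < A) (if a i == e then alpha ^+ e else 0).
  apply: eq_bigr => i _; rewrite -big_mkcond /=.
  case: ifP => h.
    rewrite (eq_bigl (fun e : 'I_A => e == Ordinal h)); first by rewrite big_pred1_eq.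
    by move=> e; rewrite -val_eqE /= eq_sym.
  rewrite big_pred0 // => e; apply/negbTE; apply/eqP => he.
  by move: (ltn_ord e); rewrite -he h.
rewrite exchange_big /=; apply: ler_sum => e _; rewrite -big_mkcond /=.
case: (pickP (fun i => a i == e)) => [i1 hi1|none].
  rewrite (bigD1 i1) //= big_pred0 ?addr0 // => j.
  apply/negbTE; apply/andP => [[hj hji]]; move: hji; apply/negP; rewrite negbK.
  apply/eqP; apply: a_inj => /=; by rewrite (eqP hj) (eqP hi1).
by rewrite big_pred0 // exprn_ge0.
Qed.

Lemma Lkey u w i0 : u \in V -> w \in V ->
  (forall i, (a i0 < a i)%N -> u 0 i = w 0 i) ->
  0 < s i0 * (u 0 i0 - w 0 i0) -> f w < f u.
Proof.
move=> uV wV hagree hpos.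
have a0 : 0 <= alpha by apply: le_trans alpha_ge1.
rewrite -subr_gt0 /dotv -sumrB.
under eq_bigr => i _ do rewrite -mulrBr mxE.
set A := a i0.
pose b i := if (a i < A)%N then alpha ^+ a i else 0.
rewrite (bigD1 i0) //=.
have ht0 : alpha ^+ A <= s i0 * alpha ^+ A * (u 0 i0 - w 0 i0).
  have [z1 hz1] := Hlat uV i0; have [z2 hz2] := Hlat wV i0.
  have e : s i0 * (u 0 i0 - w 0 i0) = (Num.sg (sigma i0) * (z1 - z2))%:~R.
    by rewrite hz1 hz2 intrM intrB.
  move: hpos; rewrite e ltr0z => hm.
  have hm1 : (1 <= Num.sg (sigma i0) * (z1 - z2))%R by lia.
  rewrite mulrAC -[X in X <= _]mul1r ler_wpM2r ?exprn_ge0 //.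
  by rewrite e ler1z.
have hrest : - (k%:R * \sum_(i | i != i0) b i) <=
             \sum_(i | i != i0) s i * alpha ^+ a i * (u 0 i - w 0 i).
  rewrite mulr_sumr -sumrN; apply: ler_sum => i hi.
  rewrite /b; case: ltngtP => h.
  - have := boxV uV i; have := boxV wV i.
    have ha : 0 <= alpha ^+ a i by rewrite exprn_ge0.
    case: (s_pm i) => -> /andP[w1 w2] /andP[u1 u2].
      rewrite mul1r -mulNr [X in X <= _]mulrC ler_wpM2l //; lra.
    rewrite mulN1r mulNr lerN2 [X in _ <= X]mulrC ler_wpM2l //; lra.
  - by rewrite hagree // subrr mulr0 mulr0 oppr0.
  - by move: hi; rewrite (a_inj h) eqxx.
have hsum : \sum_(i | i != i0) b i <= \sum_(e < A) alpha ^+ e.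
  apply: le_trans (count_le A); rewrite [X in _ <= X](bigD1 i0) //=.
  by rewrite /b ltnn add0r.
have hS := subrX1 alpha A.
have hS0 : 0 <= \sum_(e < A) alpha ^+ e by apply: sumr_ge0 => e _; rewrite exprn_ge0.
have hb0 : 0 <= \sum_(i | i != i0) b i.
  by apply: sumr_ge0 => i _; rewrite /b; case: ifP => // _; rewrite exprn_ge0.
have hk := k_alpha.
have hk0 : 0 <= k%:R :> R by [].
have : k%:R * \sum_(i | i != i0) b i <= (alpha - 1) * \sum_(e < A) alpha ^+ e.
  apply: le_trans (_ : k%:R * \sum_(e < A) alpha ^+ e <= _).
    by rewrite ler_wpM2l.
  by rewrite ler_wpM2r.
rewrite -hS.
set T0 := s i0 * _ * _ in ht0 *.
set T1 := \sum_(i | i != i0) _ in hrest *.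
set B := \sum_(i | i != i0) b i in hrest hb0 *.
move=> hh; lra.
Qed.


Variable v : 'rV[R]_n.
Hypothesis vV : v \in V.
Hypothesis vmax : forall u, u \in V -> f u <= f v.

Lemma uniqV u : u \in V -> f v <= f u -> u = v.
Proof.
move=> uV hle.
case: (pickP (fun i => u 0 i != v 0 i)) => [i1 hi1|none]; last first.
  by apply/rowP => i; have := none i => /= /negbFE /eqP.
case: (@arg_maxnP _ i1 (fun i => u 0 i != v 0 i) (fun i => a i) hi1) => i0 hne hmaxi.
have hag : forall i, (a i0 < a i)%N -> u 0 i = v 0 i.
  move=> i hi; apply/eqP; apply: contraTT hi => /hmaxi; rewrite -leqNgt; done.
have hd : u 0 i0 - v 0 i0 != 0 by rewrite subr_eq0.
have := vmax uV.
case: (s_pm i0) => hs.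
  have [hlt|hgt] : 0 < u 0 i0 - v 0 i0 \/ u 0 i0 - v 0 i0 < 0.
    by move: hd; rewrite neq_lt => /orP[]; [right|left].
    have := Lkey uV vV hag; rewrite hs mul1r => /(_ hlt) h1 h2.
    by have := lt_le_trans h1 h2; rewrite ltxx.
  have hag' : forall i, (a i0 < a i)%N -> v 0 i = u 0 i by move=> i /hag ->.
  have := Lkey vV uV hag'; rewrite hs mul1r => h1 h2.
  have := h1 ltac:(lra) => h3.
  by have := lt_le_trans h3 hle; rewrite ltxx.
have [hlt|hgt] : 0 < u 0 i0 - v 0 i0 \/ u 0 i0 - v 0 i0 < 0.
  by move: hd; rewrite neq_lt => /orP[]; [right|left].
  have hag' : forall i, (a i0 < a i)%N -> v 0 i = u 0 i by move=> i /hag ->.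
  have := Lkey vV uV hag'; rewrite hs => h1 h2.
  have := h1 ltac:(lra) => h3.
  by have := lt_le_trans h3 hle; rewrite ltxx.
have := Lkey uV vV hag; rewrite hs => h1 h2.
have := h1 ltac:(lra) => h3.
by have := lt_le_trans h3 h2; rewrite ltxx.
Qed.

Lemma e_dot_some j i1 x : a i1 = j -> dotv (e_sinv R sigma j) x = s i1 * x 0 i1.
Proof.
move=> h; rewrite /dotv (bigD1 i1) //= big1 ?addr0.
  by rewrite mxE h eqxx.
move=> i hi; rewrite mxE; case: eqP => [hj|]; last by rewrite mul0r.
by move: hi; rewrite (a_inj (etrans hj (esym h))) eqxx.
Qed.

Lemma e_dot_none j x : (forall i, a i != j) -> dotv (e_sinv R sigma j) x = 0.
Proof.
move=> h; rewrite /dotv big1 // => i _; rewrite mxE (negbTE (h i)) mul0r //.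
Qed.

Definition Qt (t : nat) (u : 'rV[R]_n) := forall i, (n - t < a i)%N -> u 0 i = v 0 i.

Lemma face_ext (c : 'rV[R]_n) (S S' : 'rV[R]_n -> Prop) :
  (forall x, S x <-> S' x) -> forall x, face_max c S x <-> face_max c S' x.
Proof.
move=> h x; split=> [[h1 h2]|[h1 h2]]; split.
- exact/h.
- by move=> y /h /h2.
- exact/h.
- by move=> y /h /h2.
Qed.

Lemma convP_ext (Q Q' : 'rV[R]_n -> Prop) :
  (forall u, Q u <-> Q' u) -> forall x, convP V Q x <-> convP V Q' x.
Proof. by move=> h x; split; apply: convP_weak => u /h. Qed.

Lemma flag_inv t x : flag_step (conv V) sigma t x <-> convP V (Qt t) x.
Proof.
elim: t x => [|t IH] x /=.
  rewrite conv_convP; apply: convP_ext => u; split=> // _ i.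
  by rewrite subn0 => h; have := a_bound i; lia.
rewrite (face_ext _ IH).
have hQ : Qt t v by [].
case: (pickP (fun i => a i == (n - t)%N)) => [i1 /eqP hi1|none].
- rewrite (face_convP vV hQ).
    apply: convP_ext => u; rewrite !(e_dot_some _ hi1); split.
      move=> [hq he] i hi.
      have [hlt|heq] : (n - t < a i)%N \/ a i = (n - t)%N by lia.
        exact: hq.
      have -> : i = i1 by apply: a_inj; rewrite /= heq hi1.
      by case: (s_pm i1) he => ->; rewrite ?mul1r ?mulN1r // => /oppr_inj.
    move=> hq; split.
      by move=> i hi; apply: hq; lia.
    have := a_bound i1; move=> hb.
    by rewrite hq //; lia.
  move=> u uV hqu; rewrite !(e_dot_some _ hi1).
  rewrite leNgt; apply/negP => hlt.
  have hpos : 0 < s i1 * (u 0 i1 - v 0 i1) by rewrite mulrBr subr_gt0.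
  have hag : forall i, (a i1 < a i)%N -> u 0 i = v 0 i.
    by move=> i hi; apply: hqu; rewrite -hi1.
  have := Lkey uV vV hag hpos => h1.
  by have := lt_le_trans h1 (vmax uV); rewrite ltxx.
- have none' : forall i, a i != (n - t)%N by move=> i; rewrite none.
  rewrite (face_convP vV hQ).
    apply: convP_ext => u; rewrite !(e_dot_none _ none'); split.
      move=> [hq _] i hi.
      have [hlt|heq] : (n - t < a i)%N \/ a i = (n - t)%N by lia.
        exact: hq.
      by move: (none' i); rewrite heq eqxx.
    move=> hq; split=> //.
    by move=> i hi; apply: hq; lia.
  by move=> u _ _; rewrite !(e_dot_none _ none').
Qed.

Lemma flag_final x : flagG (conv V) sigma 0 x <-> x = v.
Proof.
rewrite /flagG subn0 flag_inv; split.
  apply: convP_single => u _ hq; apply/rowP => i.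
  by apply: hq; have := a_bound i; lia.
by move=> ->; apply: convP_mem.
Qed.

Lemma fmax_conv y : conv V y -> f y <= f v.
Proof.
have hT : (fun _ : 'rV[R]_n => True) v by [].
have := face_convP vV hT (fun u uV _ => vmax uV) v.
move=> [_ h]; move: (h (convP_mem vV (Q:=fun u => True /\ f u = f v) (conj I erefl))).
by move=> [_ hh] /conv_convP /hh.
Qed.

Lemma uniq_conv z : conv V z -> f v <= f z -> z = v.
Proof.
move=> hz hle.
have hT : (fun _ : 'rV[R]_n => True) v by [].
have := face_convP vV hT (fun u uV _ => vmax uV) z.
move=> [h _].
have hf : face_max (x_sigma sigma alpha) (convP V (fun _ => True)) z.
  split; first exact/conv_convP.
  move=> y /conv_convP /fmax_conv hy; exact: le_trans hy hle.
move: (h hf); apply: convP_single => u uV [_ hu].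
by apply: uniqV => //; rewrite hu.
Qed.

End Main.

Lemma exists_max (R : realFieldType) (T : eqType) (sq : seq T) (g : T -> R) :
  sq != [::] -> exists2 v, v \in sq & forall u, u \in sq -> g u <= g v.
Proof.
elim: sq => // x sq IH _.
case: (eqVneq sq [::]) => [->|hne].
  by exists x => [|u]; rewrite ?mem_seq1 ?inE // => /eqP ->.
have [w wI wm] := IH hne.
case: (leP (g x) (g w)) => h.
  exists w; first by rewrite inE wI orbT.
  by move=> u; rewrite inE => /orP[/eqP ->|/wm].
exists x; first by rewrite inE eqxx.
move=> u; rewrite inE => /orP[/eqP ->//|/wm hu]; exact: le_trans hu (ltW h).
Qed.

Theorem mainTheorem10 (R : realFieldType) (n k : nat) (V : seq 'rV[R]_n)
  (sigma : 'I_n -> int) (alpha : R) :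
  V != [::] ->
  (forall v, v \in V -> lattice_point v) ->
  (forall x, conv V x -> forall i, 0 <= x 0 i <= k%:R) ->
  signed_perm sigma ->
  (2 * k + 1)%:R <= alpha ->
  exists v : 'rV[R]_n,
    [/\ is_vertex (conv V) v,
        (forall x, flagG (conv V) sigma 0 x <-> x = v),
        (forall y, conv V y -> dotv (x_sigma sigma alpha) y
                                 <= dotv (x_sigma sigma alpha) v)
      & (forall w, is_vertex (conv V) w -> w != v ->
           dotv (x_sigma sigma alpha) w < dotv (x_sigma sigma alpha) v)].
Proof.
move=> hV Hlat Hbox Hsig Halpha.
have [v vV vmax] := exists_max (fun u => dotv (x_sigma sigma alpha) u) hV.
have U := uniq_conv Hlat Hbox Hsig Halpha vV vmax.
have M := fmax_conv vV vmax.
exists v; split.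
- split; first by apply/conv_convP; apply: convP_mem.
  move=> x y t hx hy /andP[t0 t1] hv.
  have ex : dotv (x_sigma sigma alpha) v =
     t * dotv (x_sigma sigma alpha) x + (1 - t) * dotv (x_sigma sigma alpha) y.
    by rewrite {1}hv dotv_comb.
  have fx := M _ hx; have fy := M _ hy.
  have hxv : dotv (x_sigma sigma alpha) v <= dotv (x_sigma sigma alpha) x by nra.
  have hyv : dotv (x_sigma sigma alpha) v <= dotv (x_sigma sigma alpha) y by nra.
  by rewrite (U _ hx hxv) (U _ hy hyv).
- exact: (flag_final Hlat Hbox Hsig Halpha vV vmax).
- exact: M.
- move=> w [hw _] hne; rewrite ltNge; apply/negP => h.
  by move: hne; rewrite (U _ hw h) eqxx.
Qed.
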